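(* Let $f(X)=\sum_{i=0}^{h-1}f_iX^{q^i}$ be an invertible $\mathbb F_q$-linearised polynomial over $\mathbb F_{q^h}$ with exactly two nonzero coefficients, and suppose that $f$ is not semi-linear over any subfield $\mathbb F_{q^s}$ of $\mathbb F_{q^h}$ with $\mathbb F_{q^s}\supsetneq\mathbb F_q$. Then all coefficients of $f^{-1}(X)=\sum_{i=0}^{h-1}\overline f_iX^{q^i}$ are nonzero.
   Context: An $\mathbb F_q$-linearised polynomial over $\mathbb F_{q^h}$ is $\sum_{l=0}^{h-1}a_lX^{q^l}$ with $a_l\in\mathbb F_{q^h}$, viewed as a map of $\mathbb F_{q^h}$; invertible means bijective, and its inverse map is again such a polynomial. For a subfield $K$ of $\mathbb F_{q^h}$, $f$ is $K$-semi-linear if there is a field automorphism $\sigma$ of $\mathbb F_{q^h}$ with $f(\alpha x)=\alpha^\sigma f(x)$ for all $\alpha\in K$, $x\in\mathbb F_{q^h}$. *)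

(* Defs.v *)
From HB Require Import structures.
From mathcomp Require Import all_boot all_order all_algebra all_field.
Set Implicit Arguments. Unset Strict Implicit. Unset Printing Implicit Defensive.
Import GRing.Theory.
Local Open Scope ring_scope.

Definition linpoly (L : finFieldType) (q h : nat) (a : 'I_h -> L) (x : L) : L :=
  \sum_(l < h) a l * x ^+ (q ^ l)%N.

Definition subfield_qs (L : finFieldType) (q s : nat) : pred L :=
  fun alpha => alpha ^+ (q ^ s)%N == alpha.

Definition semilinear_over (L : finFieldType) (q h : nat) (a : 'I_h -> L) (s : nat) : Prop :=
  exists sigma : {rmorphism L -> L}, bijective sigma /\
    forall alpha x, alpha \in subfield_qs q s ->
      linpoly q a (alpha * x) = sigma alpha * linpoly q a x.

(* Main.v *)
Require Import Defs.
From HB Require Import structures.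
From mathcomp Require Import all_boot all_order all_algebra all_field.
From mathcomp Require Import ring zify.
Import GRing.Theory.
Local Open Scope ring_scope.

Lemma frobD (L : fieldType) p (chp : p \in [pchar L]) k (x y : L) :
  (x + y) ^+ (p ^ k) = x ^+ (p ^ k) + y ^+ (p ^ k).
Proof.
elim: k => [|k IH]; first by rewrite !expr1.
by rewrite expnSr !exprM IH -!(pFrobenius_autE chp) rmorphD.
Qed.

Definition frobk {L : fieldType} {p} (chp : p \in [pchar L]) (k : nat) (x : L) := x ^+ (p ^ k).

Lemma frobk_nmod (L : fieldType) p (chp : p \in [pchar L]) k : nmod_morphism (frobk chp k).
Proof.
split=> [|x y]; rewrite /frobk ?frobD //.
have p0 := prime_gt0 (pcharf_prime chp). rewrite expr0n expn_eq0. by case: (p) p0.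
Qed.
Lemma frobk_mon (L : fieldType) p (chp : p \in [pchar L]) k : monoid_morphism (frobk chp k).
Proof. by split=> [|x y]; rewrite /frobk ?expr1n ?exprMn. Qed.

HB.instance Definition _ (L : fieldType) p (chp : p \in [pchar L]) k :=
  GRing.isNmodMorphism.Build L L (frobk chp k) (@frobk_nmod L p chp k).
HB.instance Definition _ (L : fieldType) p (chp : p \in [pchar L]) k :=
  GRing.isMonoidMorphism.Build L L (frobk chp k) (@frobk_mon L p chp k).


Lemma qfacts (L : finFieldType) q h (hh : (0 < h)%N) (hL : #|L| = (q ^ h)%N) :
  exists p (chp : p \in [pchar L]) m, q = (p ^ m)%N.
Proof.
have [p pp chp] := finPcharP L.
have [n hn] : exists n, #|L| = (p ^ n)%N by have := card_pprimeChar chp; eexists; exact: H.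
have : (q %| p ^ n)%N by rewrite -hn hL dvdn_exp.
case/(dvdn_pfactor _ _ pp) => m _ ->.
by exists p, chp, m.
Qed.

Lemma Xmod (L : finFieldType) q h (hL : #|L| = (q ^ h)%N) (x : L) n :
  x ^+ (q ^ n) = x ^+ (q ^ (n %% h)%N).
Proof.
rewrite {1}(divn_eq n h); elim: (n %/ h)%N => [|c IH]; first by rewrite mul0n add0n.
by rewrite mulSn -addnA expnD mulnC exprM -hL expf_card.
Qed.

Lemma linpoly_uniq (L : finFieldType) q h (hq : (1 < q)%N) (hL : #|L| = (q ^ h)%N)
  (d : 'I_h -> L) : (forall x, linpoly q d x = 0) -> forall l, d l = 0.
Proof.
move=> H l.
pose P : {poly L} := \sum_(m < h) d m *: 'X^(q ^ m).
have HP x : P.[x] = linpoly q d x.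
  by rewrite /P horner_sum; apply: eq_bigr => m _; rewrite hornerZ hornerXn.
have sP : (size P <= q ^ h)%N.
  rewrite /P; apply: (big_ind (fun p : {poly L} => size p <= q ^ h)%N).
  - by rewrite size_poly0.
  - by move=> a b ha hb; apply: leq_trans (size_polyD a b) _; rewrite geq_max ha hb.
  - move=> m _; apply: leq_trans (size_scale_leq _ _) _.
    by rewrite size_polyXn ltn_exp2l.
have P0 : P = 0.
  apply/eqP; apply/negPn/negP => nz.
  have hr : all (root P) (enum L) by apply/allP => x _; rewrite /root HP H.
  have := max_poly_roots nz hr (enum_uniq _).
  by rewrite -cardE hL ltnNge sP.
have : P`_(q ^ l) = d l.
  rewrite /P coef_sum (bigD1 l) //= coefZ coefXn eqxx mulr1 big1 ?addr0 // => m nm.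
  rewrite coefZ coefXn eqn_exp2l //.
  by rewrite (_ : (nat_of_ord l == m) = false) ?mulr0 //; apply/negbTE; rewrite eq_sym; exact: nm.
by rewrite P0 coef0.
Qed.

Definition hper {T : Type} (h : nat) (F : nat -> T) := forall n, F n = F (n %% h)%N.

Lemma shift_sum (L : finFieldType) h (F : nat -> L) : hper h F ->
  forall a, \sum_(l < h) F (l + a)%N = \sum_(l < h) F l.
Proof.
move=> hF; elim=> [|a IH]; first by apply: eq_bigr => l _; rewrite addn0.
rewrite -IH; case: h hF {IH} => [|n] hF; first by rewrite !big_ord0.
rewrite big_ord_recr big_ord_recl /= addrC; congr (_ + _).
  by rewrite hF [in RHS]hF addnS -addSn modnDl add0n.
by apply: eq_bigr => l _; rewrite addnS.
Qed.

Lemma coprime_of (L : finFieldType) q h (hq : (1 < q)%N) (hh : (0 < h)%N)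
  (hL : #|L| = (q ^ h)%N) (f : 'I_h -> L) (i j : 'I_h) (lt : (i < j)%N)
  (hf : forall x, linpoly q f x = f i * x ^+ (q ^ i) + f j * x ^+ (q ^ j))
  (hns : forall s : nat, (s %| h)%N -> (1 < s)%N -> ~ semilinear_over q f s) :
  coprime (j - i) h.
Proof.
have [p [chp [m qE]]] := @qfacts L q h hh hL.
set s := gcdn (j - i) h.
have s0 : (0 < s)%N by rewrite gcdn_gt0 hh orbT.
rewrite /coprime -/s; case: (ltngtP s 1) => // [s_lt1 | s_gt1]; first by lia.
exfalso; apply: (hns s (dvdn_gcdr _ _) s_gt1).
exists (frobk chp (m * i)); split; first by apply: injF_bij; exact: fmorph_inj.
move=> al x hal; rewrite !hf /frobk /=.
have hs c : al ^+ (q ^ (s * c)) = al.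
  elim: c => [|c IH]; first by rewrite muln0 expr1.
  by rewrite mulnS expnD exprM (eqP hal) IH.
have alE : al ^+ (q ^ j) = al ^+ (q ^ i).
  have -> : nat_of_ord j = ((j - i) + i)%N by rewrite subnK // ltnW.
  rewrite expnD exprM -(divnK (dvdn_gcdl (j - i) h)) -/s mulnC hs //.
have -> : (frobk chp (m * i) : {rmorphism L -> L}) al = al ^+ (q ^ i) by rewrite /= /frobk expnM -qE.
rewrite !exprMn alE; ring.
Qed.

Lemma core (L : finFieldType) q h (hq : (1 < q)%N) (hh : (0 < h)%N)
  (hL : #|L| = (q ^ h)%N) (f : 'I_h -> L) (i j : 'I_h) (lt : (i < j)%N)
  (fi : f i != 0) (fj : f j != 0)
  (hf : forall x, linpoly q f x = f i * x ^+ (q ^ i) + f j * x ^+ (q ^ j))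
  (cop : coprime (j - i) h) (e : 'I_h -> L)
  (He : forall x, linpoly q e (linpoly q f x) = x) : forall l, e l != 0.
Proof.
have [p [chp [m qE]]] := @qfacts L q h hh hL.
have qD l (x y : L) : (x + y) ^+ (q ^ l) = x ^+ (q ^ l) + y ^+ (q ^ l).
  by rewrite qE -expnM frobD.
have Xm := @Xmod L q h hL.
have ilt : (i < h)%N := ltn_ord i.
have jlt : (j < h)%N := ltn_ord j.
pose E n := e (Ordinal (ltn_pmod n hh)).
have EE n : E n = E (n %% h)%N.
  by congr e; apply: val_inj; rewrite /= modn_mod.
have Ee (l : 'I_h) : e l = E l.
  by congr e; apply: val_inj; rewrite /= modn_small.
pose A n := f i ^+ (q ^ n); pose B n := f j ^+ (q ^ n).
have shE c n : E (n + c)%N = E (n %% h + c)%N by rewrite EE [RHS]EE modnDml.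
have shX (x : L) c n : x ^+ (q ^ (n + c)) = x ^+ (q ^ (n %% h + c)).
  by rewrite Xm [RHS]Xm modnDml.
have shX' (x : L) c n : x ^+ (q ^ (c + n)) = x ^+ (q ^ (c + n %% h)).
  by rewrite addnC shX addnC.
pose C n := E (n + (h - i))%N * A (n + (h - i))%N + E (n + (h - j))%N * B (n + (h - j))%N.
have Cper : hper h C.
  by move=> n; rewrite /C /A /B (shE (h - i)%N n) (shE (h - j)%N n) (shX _ (h - i)%N n) (shX _ (h - j)%N n).
have Hx x : x = \sum_(l < h) C l * x ^+ (q ^ l).
  pose F1 n := E n * A n * x ^+ (q ^ (i + n)).
  pose F2 n := E n * B n * x ^+ (q ^ (j + n)).
  have F1p : hper h F1.
    by move=> n; rewrite /F1 /A EE Xm shX'.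
  have F2p : hper h F2.
    by move=> n; rewrite /F2 /B EE Xm shX'.
  have Xh (y : L) n : y ^+ (q ^ (n + h)) = y ^+ (q ^ n) by rewrite Xm [RHS]Xm modnDr.
  rewrite -{1}(He x) hf /linpoly.
  transitivity (\sum_(l < h) F1 l + \sum_(l < h) F2 l).
    rewrite -big_split; apply: eq_bigr => l _.
    rewrite qD !exprMn -!exprM -!expnD Ee /F1 /F2 /A /B; by rewrite mulrDr !mulrA.
  rewrite -(@shift_sum L h F1 F1p (h - i)%N) -(@shift_sum L h F2 F2p (h - j)%N) -big_split.
  apply: eq_bigr => l _; rewrite /F1 /F2 /C.
  have -> : (i + (l + (h - i)) = l + h)%N by lia.
  have -> : (j + (l + (h - j)) = l + h)%N by lia.
  rewrite !Xh /=; ring.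
have DL (l : 'I_h) : C l = ((l : nat) == 0%N)%:R.
  pose D (l : 'I_h) := C l - ((l : nat) == 0%N)%:R.
  suff : D l = 0 by move/eqP; rewrite subr_eq0 => /eqP.
  apply: (@linpoly_uniq L q h hq hL D) => x.
  rewrite /linpoly /D; under eq_bigr do rewrite mulrBl.
  rewrite sumrB -Hx (bigD1 (Ordinal hh)) //= big1 ?addr0 ?mul1r ?expr1 ?expn0 ?subrr //.
  move=> l' nl'; rewrite (_ : (nat_of_ord l' == 0%N) = false) ?mul0r //.
  by apply/negbTE; exact: nl'.
have Cn n : C n = (((n %% h)%N == 0%N))%:R.
  by rewrite Cper (DL (Ordinal (ltn_pmod n hh))).
set k := (j - i)%N.
pose g t := E (t * k + (h - j))%N.
have rel t : g t.+1 * A (t * k + (h - i))%N + g t * B (t * k + (h - j))%N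
    = (((t * k %% h)%N == 0%N))%:R.
  rewrite -Cn /C /g.
  have -> : (t.+1 * k + (h - j) = t * k + (h - i))%N.
    by rewrite mulSn /k; lia.
  by [].
have Anz n : A n != 0 by rewrite expf_neq0.
have Bnz n : B n != 0 by rewrite expf_neq0.
have step t : (0 < t < h)%N -> (g t.+1 == 0) = (g t == 0).
  move=> /andP[t0 th]; have := rel t.
  rewrite (_ : ((t * k %% h)%N == 0%N) = false); last first.
    apply/negbTE; rewrite -/(dvdn h (t * k)) Gauss_dvdl; last by rewrite coprime_sym.
    by apply/negP => /(dvdn_leq t0); rewrite leqNgt th.
  move=> r; apply/eqP/eqP => z; move: r; rewrite z ?mul0r ?add0r ?addr0 => /eqP;
    by rewrite mulf_eq0 ?(negbTE (Anz _)) ?(negbTE (Bnz _)) ?orbF => /eqP.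
have all0 t : (0 < t <= h)%N -> (g t == 0) = (g 1%N == 0).
  elim: t => // t IH /andP[_ th]; case: t IH th => // t IH th.
  by rewrite step ?IH //; lia.
have g0h : g 0%N = g h by rewrite /g EE [RHS]EE mul0n add0n mulnC modnMDl.
move=> l0; apply/eqP => z.
pose phi (t : 'I_h) : 'I_h := Ordinal (ltn_pmod (t.+1 * k + (h - j)) hh).
have phi_inj : injective phi.
  suff H (t1 t2 : 'I_h) : (t1 <= t2)%N -> phi t1 = phi t2 -> t1 = t2.
    by move=> t1 t2; case: (leqP t1 t2) => [le|/ltnW le] e12; [|apply/esym]; apply: H.
  move=> le /(congr1 val) /= /eqP; rewrite eqn_modDr eq_sym eqn_mod_dvd; last first.
    by rewrite leq_mul2r ltnS le orbT.
  rewrite -mulnBl Gauss_dvdl; last by rewrite coprime_sym.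
  rewrite subSS => dv; have t2h := ltn_ord t2; apply: val_inj => /=.
  case: (posnP (t2 - t1)) => [|pos]; first by lia.
  by have := dvdn_leq pos dv; lia.
have [psi _ psiK] := injF_bij phi_inj.
have gt : g (psi l0).+1 = 0.
  rewrite /g EE -z Ee; congr E; by have := congr1 val (psiK l0).
have g1 : g 1%N == 0 by rewrite -(all0 (psi l0).+1) ?gt //= ltn_ord.
have := rel 0%N.
rewrite mul0n mod0n eqxx g0h.
have -> : g h = 0.
  by apply/eqP; rewrite all0 ?g1 // hh leqnn.
rewrite (eqP g1) !mul0r addr0 => /eqP; by rewrite eq_sym oner_eq0.
Qed.

Theorem lemma5p14 (q h : nat) (L : finFieldType)
  (hq : (1 < q)%N) (hh : (0 < h)%N) (hL : #|L| = (q ^ h)%N)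
  (f : 'I_h -> L)
  (hinv : bijective (linpoly q f))
  (htwo : #|[set i | f i != 0]| = 2%N)
  (hns : forall s : nat, (s %| h)%N -> (1 < s)%N -> ~ semilinear_over q f s) :
  forall finv : 'I_h -> L,
    (forall x : L, linpoly q finv (linpoly q f x) = x) ->
    forall i : 'I_h, finv i != 0.
Proof.
move=> finv Hinv.
have /cards2P [i [j [nij Sij]]] : #|[set i | f i != 0]| == 2%N by rewrite htwo.
have memS l : (f l != 0) = (l \in [set i; j]) by rewrite -Sij inE.
have fi : f i != 0 by rewrite memS !inE eqxx.
have fj : f j != 0 by rewrite memS !inE eqxx orbT.
have hf x : linpoly q f x = f i * x ^+ (q ^ i) + f j * x ^+ (q ^ j).
  rewrite /linpoly (bigD1 i) //= (bigD1 j) /=; last by rewrite eq_sym.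
  rewrite big1 ?addr0 ?addrA // => l /andP[li lj].
  have : ~~ (f l != 0) by rewrite memS !inE negb_or li lj.
  by rewrite negbK => /eqP ->; rewrite mul0r.
case: (ltngtP i j) => [lt|gt|eq].
- apply: (@core L q h hq hh hL f i j lt fi fj hf _ finv Hinv).
  exact: (@coprime_of L q h hq hh hL f i j lt hf hns).
- have hf' x : linpoly q f x = f j * x ^+ (q ^ j) + f i * x ^+ (q ^ i).
    by rewrite hf addrC.
  apply: (@core L q h hq hh hL f j i gt fj fi hf' _ finv Hinv).
  exact: (@coprime_of L q h hq hh hL f j i gt hf' hns).
- by move: nij; rewrite (val_inj eq) eqxx.
Qed.
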